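(* Let $n\ge 3$ be an integer and let $\{D_I\}_{I\in\binom{[n]}{n-1}}$ be a family of positive real numbers, where $[n]=\{1,\dots,n\}$; write $D_{\hat i}=D_{[n]\setminus\{i\}}$ for $i\in[n]$. There exists a positive-weighted tree $\mathcal T=(T,w)$ with vertex set exactly $V(T)=[n]$ such that $D_{\hat i}(\mathcal T)=D_{\hat i}$ for all $i\in[n]$ if and only if the following three conditions hold: (i) $(n-2)D_{\hat i}\le \sum_{j\in[n]\setminus\{i\}} D_{\hat j}$ for every $i\in[n]$, and at most one of these inequalities is an equality; (ii) either one of the inequalities in (i) is an equality, or the maximum of $\{D_{\hat i}\}_{i\in[n]}$ is attained by at least two indices $i$; (iii) the maximum of $\{D_{\hat i}\}_{i\in[n]}$ is attained by at most $n-2$ indices $i$.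
   Context: All graphs are simple and finite. A positive-weighted graph $\mathcal G=(G,w)$ is a graph $G$ with a function $w:E(G)\to\mathbb R_{>0}$; for a subgraph $G'$, $w(G')$ is the sum of the weights of the edges of $G'$. For distinct vertices $i_1,\dots,i_k$ of $G$, $D_{\{i_1,\dots,i_k\}}(\mathcal G)$ is the minimum of $w(R)$ over all connected subgraphs $R$ of $G$ whose vertex set contains $i_1,\dots,i_k$. We write $D_{\hat i}(\mathcal G)=D_{[n]\setminus\{i\}}(\mathcal G)$. *)

(* Defs.v *)
From mathcomp Require Import all_boot all_order all_algebra.
Set Implicit Arguments. Unset Strict Implicit. Unset Printing Implicit Defensive.
Import Order.TTheory GRing.Theory Num.Theory.
Local Open Scope ring_scope.

Definition simple_graph n (adj : rel 'I_n) : Prop :=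
  (forall i, ~~ adj i i) /\ (forall i j, adj i j = adj j i).

(* Positive weights on the edges; the weight of the edge {i,j} (i<j) is w i j. *)
Definition pos_weights (R : numDomainType) n (adj : rel 'I_n)
  (w : 'I_n -> 'I_n -> R) : Prop :=
  forall i j, adj i j -> 0 < w i j.

Definition graph_connected n (adj : rel 'I_n) : Prop :=
  forall x y, connect adj x y.

Definition acyclic n (adj : rel 'I_n) : Prop :=
  forall s : seq 'I_n, uniq s -> (3 <= size s)%N -> ~~ cycle adj s.

Definition is_tree n (adj : rel 'I_n) : Prop :=
  simple_graph adj /\ graph_connected adj /\ acyclic adj.

Definition is_subgraph n (adj : rel 'I_n) (VR : {set 'I_n})
  (ER : {set 'I_n * 'I_n}) : Prop :=
  forall p, p \in ER -> [/\ (p.1 < p.2)%N, adj p.1 p.2, p.1 \in VR & p.2 \in VR].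

Definition sub_adj n (ER : {set 'I_n * 'I_n}) : rel 'I_n :=
  fun a b => ((a, b) \in ER) || ((b, a) \in ER).

Definition sub_connected n (VR : {set 'I_n}) (ER : {set 'I_n * 'I_n}) : Prop :=
  forall x y, x \in VR -> y \in VR -> connect (sub_adj ER) x y.

Definition sub_weight (R : numDomainType) n (w : 'I_n -> 'I_n -> R)
  (ER : {set 'I_n * 'I_n}) : R :=
  \sum_(p in ER) w p.1 p.2.

(* d is D_S(G,w): the minimum weight of a connected subgraph whose vertex
   set contains S. *)
Definition is_D (R : numDomainType) n (adj : rel 'I_n) (w : 'I_n -> 'I_n -> R)
  (S : {set 'I_n}) (d : R) : Prop :=
  (exists VR ER, [/\ is_subgraph adj VR ER, sub_connected VR ER,
                     S \subset VR & sub_weight w ER = d]) /\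
  (forall VR ER, is_subgraph adj VR ER -> sub_connected VR ER ->
                 S \subset VR -> d <= sub_weight w ER).

(* Main.v *)
Require Import Defs.
From mathcomp Require Import all_boot all_order all_algebra.
From mathcomp Require Import lra zify.
From Stdlib Require Import FunctionalExtensionality.
Set Implicit Arguments. Unset Strict Implicit. Unset Printing Implicit Defensive.
Import Order.TTheory GRing.Theory Num.Theory.

Local Close Scope ring_scope.

Section TreeFacts.
Variable n : nat.
Variable adj : rel 'I_n.
Hypothesis Hirr : forall i, ~~ adj i i.
Hypothesis Hsym : forall i j, adj i j = adj j i.
Hypothesis Hacyc : acyclic adj.

Lemma adj_neq a b : adj a b -> a != b.
Proof. by apply: contraTneq => ->; rewrite (negbTE (Hirr b)). Qed.

Lemma edge_forced (e : rel 'I_n) : subrel e adj ->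
  forall a b, connect e a b -> adj a b -> e a b.
Proof.
move=> He a b /connectP [p Hp Hl] Hab.
case: (shortenP Hp) Hl => p' Hp' Hu _ Hl.
case: p' Hp' Hu Hl => [|y [|z q]] /= Hp' Hu Hl.
- by move: Hab; rewrite Hl (negbTE (Hirr a)).
- by rewrite Hl; case/andP: Hp'.
exfalso; move/negP: (Hacyc (s:=a::y::z::q) Hu isT); apply.
rewrite /cycle (rcons_path adj a (y :: z :: q) a) /=.
rewrite -Hl (Hsym b) Hab andbT.
exact: (sub_path He (x:=a) (p:=y::z::q) Hp').
Qed.

Lemma through (e : rel 'I_n) : subrel e adj ->
  forall a b j, adj a j -> adj b j -> a != b -> connect e a b -> connect e a j.
Proof.
move=> He a b j Haj Hbj Hab /connectP [p Hp Hl].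
case: (shortenP Hp) Hl => p' Hp' Hu _ Hl.
have [jin|jnin] := boolP (j \in a :: p').
  rewrite inE eq_sym (negbTE (adj_neq Haj)) /= in jin.
  case/splitPr: jin Hp' Hu Hl => p1 p2 Hp' _ _.
  apply/connectP; exists (rcons p1 j); last by rewrite last_rcons.
  rewrite rcons_path; move: Hp'; rewrite cat_path => /andP[-> /=].
  by case/andP.
have Hu2 : uniq (j :: a :: p') by rewrite /= jnin.
have Hs : (3 <= size (j :: a :: p'))%N.
  case: p' Hp' Hu Hl {jnin Hu2} => [|y q] /= _ _ Hl; last by [].
  by rewrite Hl eqxx in Hab.
exfalso; move/negP: (Hacyc Hu2 Hs); apply.
rewrite /cycle /= Hsym Haj /= rcons_path -Hl Hbj andbT.
by apply: (sub_path He).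
Qed.


Definition leafy (j : 'I_n) := forall u v, adj j u -> adj j v -> u = v.

Lemma avoid_leaf j a b : leafy j -> a != j -> b != j -> connect adj a b ->
  exists2 p, path adj a p & (last a p = b /\ all (predC1 j) (a :: p)).
Proof.
move=> Hj Haj Hbj /connectP [p0 Hp0 Hl0].
case: (shortenP Hp0) Hl0 => p Hp Hu _ Hl.
exists p => //; split => //.
apply/allP => x Hx; apply/negP => /eqP Exj; subst x.
move: Hx; rewrite inE eq_sym (negbTE Haj) /= => Hx.
case/splitPr: Hx Hp Hu Hl => p1 p2 Hp Hu Hl.
case: p2 Hp Hu Hl => [|y p3] Hp Hu Hl.
  by move: Hbj; rewrite Hl last_cat /= eqxx.
move: Hp; rewrite cat_path => /andP [_ /= /and3P [Hxj Hjy _]].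
have Ey : last a p1 = y by apply: Hj; rewrite // Hsym.
move: Hu; rewrite -cat_cons cat_uniq => /and3P [_ Hh _].
move/negP: Hh; apply; apply/hasP; exists y; first by rewrite !inE eqxx orbT.
by rewrite -Ey mem_last.
Qed.

Definition upath (x : 'I_n) (t : seq 'I_n) := uniq (x :: t) && path adj x t.

Lemma upath_size x t : upath x t -> (size t < n)%N.
Proof.
case/andP => Hu _.
have := card_uniqP Hu; rewrite /= => <-.
by have := max_card (mem (x :: t)); rewrite card_ord.
Qed.

Lemma max_upath_leaf x t : upath x t ->
  (forall x' t', upath x' t' -> (size t' <= size t)%N) -> leafy x.
Proof.
move=> Hxt Hmax.
suff H : forall z, adj x z -> z = head x t.
  by move=> u v /H -> /H ->.
move=> z Hz.
case/andP: Hxt => Hu Hp.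
case: t Hu Hp Hmax => [|y t] Hu Hp Hmax /=.
  have : upath z [:: x] by rewrite /upath /= inE andbT (Hsym z) Hz andbT eq_sym adj_neq.
  by move/Hmax.
have [//|Hzy] := eqVneq z y; exfalso.
have [zin|znin] := boolP (z \in x :: y :: t); last first.
  have : upath z (x :: y :: t).
    rewrite /upath; apply/andP; split; first by rewrite cons_uniq znin Hu.
    by rewrite /= Hsym Hz; exact: Hp.
  by move/Hmax; rewrite /= ltnn.
move: zin; rewrite !inE eq_sym (negbTE (adj_neq Hz)) (negbTE Hzy) /= => zin.
case/splitPr: zin Hu Hp => t1 t2 Hu Hp.
have Hu2 : uniq (x :: y :: rcons t1 z).
  by move: Hu; rewrite -!cat_cons -cat_rcons cat_uniq => /andP [].
have Hs : (3 <= size (x :: y :: rcons t1 z))%N by rewrite /= size_rcons.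
move/negP: (Hacyc Hu2 Hs); apply.
rewrite /cycle rcons_path /= last_rcons (Hsym z) Hz andbT.
by move: Hp => /= /andP [-> ]; rewrite -cat_rcons cat_path => /andP [-> _].
Qed.

Lemma two_leaves a b : adj a b -> exists l1 l2, [/\ l1 != l2, leafy l1 & leafy l2].
Proof.
move=> Hab.
pose P m := [exists x, exists t : (m.-tuple 'I_n), upath x t].
have exP : exists m, P m.
  exists 1%N; apply/existsP; exists a; apply/existsP; exists [tuple b].
  by rewrite /upath /= inE adj_neq //= Hab.
have ubP : forall m, P m -> (m <= n)%N.
  move=> m /existsP [x /existsP [t /upath_size]]; rewrite size_tuple; exact: ltnW.
case: (ex_maxnP exP ubP) => m /existsP [x /existsP [t Hxt]] Hm.
have Hmax : forall x' t', upath x' t' -> (size t' <= size t)%N.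
  move=> x' t' H; rewrite size_tuple; apply: Hm.
  apply/existsP; exists x'; apply/existsP; exists (in_tuple t'); exact: H.
have Hl1 := max_upath_leaf Hxt Hmax.
have Ht : (0 < size t)%N.
  rewrite size_tuple; apply: Hm; apply/existsP; exists a; apply/existsP; exists [tuple b].
  by rewrite /upath /= inE adj_neq //= Hab.
case/andP: (Hxt) => Hu Hp.
have Hxt' : upath (last x t) (rev (belast x t)).
  rewrite /upath rev_path; apply/andP; split.
    by rewrite -rev_rcons -lastI rev_uniq.
  by rewrite (eq_path (e' := adj)) // => u v; rewrite Hsym.
have Hl2 : leafy (last x t).
  apply: (max_upath_leaf Hxt') => x' t' /Hmax; rewrite size_rev size_belast //.
exists x, (last x t); split => //.
move: Hu Ht; case: (tval t) => [|y t0] //= /andP [Hx _] _.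
by apply: contraNneq Hx => ->; apply: mem_last.
Qed.

End TreeFacts.

Local Open Scope ring_scope.

Definition Eset n (adj : rel 'I_n) := [set p : 'I_n * 'I_n | (p.1 < p.2)%N && adj p.1 p.2].
Definition Enot n (adj : rel 'I_n) j := [set p in Eset adj | (p.1 != j) && (p.2 != j)].
Definition nb n (adj : rel 'I_n) j := [set u | adj j u].
Definition Wt (R : numDomainType) n (adj : rel 'I_n) (w : 'I_n -> 'I_n -> R) :=
  sub_weight w (Eset adj).
Definition Dt (R : numDomainType) n (adj : rel 'I_n) (w : 'I_n -> 'I_n -> R) j :=
  if (1 < #|nb adj j|)%N then Wt adj w else sub_weight w (Enot adj j).

Lemma is_D_uniq (R : realDomainType) n (adj : rel 'I_n) w S (d1 d2 : R) :
  is_D adj w S d1 -> is_D adj w S d2 -> d1 = d2.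
Proof.
move=> [[V1 [E1 [H1 H2 H3 <-]]] L1] [[V2 [E2 [K1 K2 K3 <-]]] L2].
by apply/le_anti; rewrite (L1 V2 E2) // (L2 V1 E1).
Qed.

Section Weights.
Variable R : realFieldType.
Variable n : nat.
Variable adj : rel 'I_n.
Variable w : 'I_n -> 'I_n -> R.
Hypothesis Htree : is_tree adj.
Hypothesis Hw : pos_weights adj w.

Let Hirr : forall i, ~~ adj i i. Proof. by case: Htree => [[]]. Qed.
Let Hsym : forall i j, adj i j = adj j i. Proof. by case: Htree => [[]]. Qed.
Let Hcon : graph_connected adj. Proof. by case: Htree => _ []. Qed.
Let Hacyc : acyclic adj. Proof. by case: Htree => _ []. Qed.

Lemma sub_adj_sym (ER : {set 'I_n * 'I_n}) a b : sub_adj ER a b = sub_adj ER b a.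
Proof. by rewrite /sub_adj orbC. Qed.

Lemma sub_adj_E a b : sub_adj (Eset adj) a b = adj a b.
Proof.
rewrite /sub_adj !inE /=.
case: (ltngtP a b) => H /=.
- by rewrite orbF.
- by rewrite Hsym.
have E : a = b by apply: val_inj.
by subst; rewrite (negbTE (Hirr b)).
Qed.

Lemma sub_adj_Enot j a b : adj a b -> a != j -> b != j -> sub_adj (Enot adj j) a b.
Proof.
move=> Hab Ha Hb; rewrite /sub_adj !inE /= Ha Hb /= andbT.
case: (ltngtP a b) => H /=.
- by rewrite Hab.
- by rewrite Hsym Hab.
have E : a = b by apply: val_inj.
by subst; rewrite (negbTE (Hirr b)) in Hab.
Qed.

Lemma subg_sub VR ER : is_subgraph adj VR ER -> subrel (sub_adj ER) adj.
Proof.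
move=> H a b; rewrite /sub_adj => /orP [] /H [_ /= ? _ _] //; by rewrite Hsym.
Qed.

Lemma subg_E VR ER : is_subgraph adj VR ER -> ER \subset Eset adj.
Proof. by move=> H; apply/subsetP => p /H [? ? _ _]; rewrite inE; apply/andP. Qed.

Lemma inER VR ER p : is_subgraph adj VR ER -> p \in Eset adj ->
  sub_adj ER p.1 p.2 -> p \in ER.
Proof.
move=> H; rewrite inE => /andP [Hlt _] /orP [|/H [Hlt' _ _ _]].
  by rewrite -surjective_pairing.
by move: Hlt'; rewrite /= ltnNge ltnW.
Qed.

Lemma w_ge0 p : p \in Eset adj -> 0 <= w p.1 p.2.
Proof. by rewrite inE => /andP [_ /Hw /ltW]. Qed.

Lemma sw_mono (X Y : {set 'I_n * 'I_n}) : X \subset Y -> Y \subset Eset adj ->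
  sub_weight w X <= sub_weight w Y.
Proof.
move=> HXY HY; rewrite /sub_weight (bigID (mem X) (mem Y)) /=.
have -> : \sum_(i in Y | i \in X) w i.1 i.2 = \sum_(i in X) w i.1 i.2.
  apply: eq_bigl => p; rewrite andbC; case: (boolP (p \in X)) => //= pX.
  by rewrite (subsetP HXY).
rewrite lerDl; apply: sumr_ge0 => p /andP [pY _]; apply: w_ge0.
exact: (subsetP HY).
Qed.

Lemma leafyP j : (#|nb adj j| <= 1)%N -> leafy adj j.
Proof.
move/card_le1_eqP => H u v Hu Hv; apply: H; by rewrite inE.
Qed.

Lemma lower j VR ER : is_subgraph adj VR ER -> sub_connected VR ER ->
  [set~ j] \subset VR ->
  Enot adj j \subset ER /\ ((1 < #|nb adj j|)%N -> Eset adj \subset ER).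
Proof.
move=> Hs Hc HV.
have Hsub := subg_sub Hs.
have inV : forall x, x != j -> x \in VR.
  by move=> x Hx; apply: (subsetP HV); rewrite !inE.
have HE : Enot adj j \subset ER.
  apply/subsetP => p; rewrite inE => /andP [pE /andP [H1 H2]].
  apply: (inER Hs pE); apply: (edge_forced Hirr Hsym Hacyc Hsub).
    by apply: Hc; apply: inV.
  by move: pE; rewrite inE => /andP [].
split => // /card_gt1P [u [v [Hu Hv Huv]]].
move: Hu Hv; rewrite !inE => Hu Hv.
have key : forall x, adj j x -> sub_adj ER x j.
  move=> x Hx.
  have [y Hy Hxy] : exists2 y, adj j y & x != y.
    case: (eqVneq x u) => [Exu|Hxu]; last by exists u.
    by exists v => //; rewrite Exu.
  apply: (edge_forced Hirr Hsym Hacyc Hsub); last by rewrite Hsym.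
  apply: (through Hirr Hsym Hacyc Hsub (b := y)); rewrite ?(Hsym _ j) //.
  apply: Hc; apply: inV; by rewrite eq_sym (adj_neq Hirr).
apply/subsetP => p pE.
have [H1|H1] := eqVneq p.1 j.
  apply: (inER Hs pE); rewrite H1 sub_adj_sym; apply: key.
  by move: pE; rewrite inE H1 => /andP [].
have [H2|H2] := eqVneq p.2 j.
  apply: (inER Hs pE); rewrite H2; apply: key.
  by move: pE; rewrite inE H2 Hsym => /andP [].
by apply: (subsetP HE); rewrite inE pE H1 H2.
Qed.


Lemma feas_full : is_subgraph adj setT (Eset adj) /\ sub_connected setT (Eset adj).
Proof.
split; first by move=> p; rewrite inE => /andP [H1 H2]; split; rewrite ?inE.
move=> x y _ _; rewrite (eq_connect (e' := adj)) //.
by move=> a b; rewrite sub_adj_E.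
Qed.

Lemma feas_leaf j : (#|nb adj j| <= 1)%N ->
  is_subgraph adj [set~ j] (Enot adj j) /\ sub_connected [set~ j] (Enot adj j).
Proof.
move=> Hj; split.
  by move=> p; rewrite !inE => /andP [/andP [H1 H2] /andP [H3 H4]]; split.
move=> x y; rewrite !inE => Hx Hy.
have [p Hp [Hl Hall]] := avoid_leaf Hsym (leafyP Hj) Hx Hy (Hcon x y).
apply/connectP; exists p => //.
apply: (sub_in_path (P := predC1 j)) Hall Hp => a b /= Ha Hb Hab.
exact: sub_adj_Enot.
Qed.

Lemma is_D_Dt j : is_D adj w [set~ j] (Dt adj w j).
Proof.
rewrite /Dt; case: ifP => Hj.
  have [F1 F2] := feas_full.
  split; first by exists setT, (Eset adj); split => //; apply: subsetT.
  move=> VR ER H1 H2 H3.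
  have [_ /(_ Hj) HE] := lower H1 H2 H3.
  exact: sw_mono HE (subg_E H1).
have Hj' : (#|nb adj j| <= 1)%N by rewrite leqNgt Hj.
have [F1 F2] := feas_leaf Hj'.
split; first by exists [set~ j], (Enot adj j); split.
move=> VR ER H1 H2 H3.
have [HE _] := lower H1 H2 H3.
exact: sw_mono HE (subg_E H1).
Qed.

End Weights.

Local Open Scope ring_scope.

Definition ed n (a b : 'I_n) := if (a < b)%N then (a, b) else (b, a).

Section Nec.
Variable R : realFieldType.
Variable n : nat.
Variable adj : rel 'I_n.
Variable w : 'I_n -> 'I_n -> R.
Hypothesis Htree : is_tree adj.
Hypothesis Hw : pos_weights adj w.
Hypothesis hn : (3 <= n)%N.

Let Hirr : forall i, ~~ adj i i. Proof. by case: Htree => [[]]. Qed.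
Let Hsym : forall i j, adj i j = adj j i. Proof. by case: Htree => [[]]. Qed.
Let Hcon : graph_connected adj. Proof. by case: Htree => _ []. Qed.
Let Hacyc : acyclic adj. Proof. by case: Htree => _ []. Qed.

Definition lf j := (#|nb adj j| <= 1)%N.

Lemma has_nb j : exists u, adj j u.
Proof.
have [x Hx] : exists x : 'I_n, x != j.
  have H0 : (0 < n)%N by apply: leq_trans hn.
  have H1 : (1 < n)%N by apply: leq_trans hn.
  case: (eqVneq j (Ordinal H0)) => Hj; last by exists (Ordinal H0); rewrite eq_sym.
  by exists (Ordinal H1); rewrite Hj; apply/eqP => /(congr1 val).
case/connectP: (Hcon j x) => [[|u p]] /= Hp Hl; first by rewrite -Hl eqxx in Hx.
by exists u; case/andP: Hp.
Qed.

Lemma lf_nb j u : lf j -> adj j u -> forall v, adj j v -> v = u.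
Proof. move=> /leafyP H Hu v Hv; exact: H. Qed.

Lemma leaves_not_adj a b : adj a b -> lf a -> lf b -> False.
Proof.
move=> Hab Ha Hb.
have [x /andP [Hxa Hxb]] : exists x : 'I_n, (x != a) && (x != b).
  case: (pickP (fun x : 'I_n => (x != a) && (x != b))) => [x Hx|H]; first by exists x.
  exfalso.
  have : (#|'I_n| <= #|[set a; b]|)%N.
    apply: subset_leq_card; apply/subsetP => x _; move/negbT: (H x).
    by rewrite !inE negb_and !negbK.
  rewrite card_ord cards2 => Hle.
  by have := leq_trans hn Hle; case: (a != b).
case/connectP: (Hcon a x) => p0 Hp0 Hl0.
case: (shortenP Hp0) Hl0 => p Hp Hu _ Hl.
case: p Hp Hu Hl => [|y [|z q]] /= Hp Hu Hl; first by rewrite Hl eqxx in Hxa.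
  case/andP: Hp => Hy _; have := lf_nb Ha Hab Hy.
  by move=> Eyb; rewrite Hl Eyb eqxx in Hxb.
case/and3P: Hp => Hy Hz _.
have Eyb := lf_nb Ha Hab Hy; subst y.
have Eza : z = a by apply: (lf_nb Hb); rewrite // Hsym.
by subst z; move: Hu; rewrite !inE eqxx orbT.
Qed.

Lemma internal_path i j :
  (forall a b, adj a b -> lf a || lf b) -> i != j -> ~~ lf i -> ~~ lf j -> False.
Proof.
move=> Hall Hij Hi Hj.
case/connectP: (Hcon i j) => p0 Hp0 Hl0.
case: (shortenP Hp0) Hl0 => p Hp Hu _ Hl.
case: p Hp Hu Hl => [|x [|y q]] /= Hp Hu Hl; first by rewrite Hl eqxx in Hij.
  case/andP: Hp => Hx _; have := Hall _ _ Hx; rewrite (negbTE Hi) /= -Hl.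
  by rewrite (negbTE Hj).
case/and3P: Hp => Hx Hy _.
have := Hall _ _ Hx; rewrite (negbTE Hi) /= => Lx.
have Eyi : y = i by apply: (lf_nb Lx); rewrite // Hsym.
by subst y; move: Hu; rewrite !inE eqxx orbT.
Qed.


Let W := Wt adj w.

Definition g (p : 'I_n * 'I_n) :=
  (if lf p.1 then w p.1 p.2 else 0) + (if lf p.2 then w p.1 p.2 else 0).

Lemma ed_in a b : adj a b -> ed a b \in Eset adj.
Proof.
move=> Hab; rewrite /ed; case: ifP => H; rewrite inE /=; first by rewrite H Hab.
rewrite Hsym Hab andbT ltn_neqAle leqNgt H andbT.
by have := adj_neq Hirr Hab; rewrite eq_sym.
Qed.

Lemma ed_inc (a b : 'I_n) : ((ed a b).1 == a) || ((ed a b).2 == a).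
Proof. by rewrite /ed; case: ifP => _ /=; rewrite eqxx ?orbT. Qed.

Lemma Dt_int j : ~~ lf j -> Dt adj w j = W.
Proof. by rewrite /lf /Dt -ltnNge => ->. Qed.

Lemma c_expr j : W - Dt adj w j =
  \sum_(p in Eset adj) (if lf j && ((p.1 == j) || (p.2 == j)) then w p.1 p.2 else 0).
Proof.
case: (boolP (lf j)) => Hj /=; last first.
  by rewrite Dt_int // subrr big1.
rewrite /Dt ifN; last by rewrite -leqNgt.
rewrite -big_mkcondr /W /Wt /sub_weight (bigID (fun p => (p.1 == j) || (p.2 == j))) /=.
rewrite addrC -addrA.
have -> : \sum_(i in Enot adj j) w i.1 i.2 =
          \sum_(i in Eset adj | ~~ ((i.1 == j) || (i.2 == j))) w i.1 i.2.
  by apply: eq_bigl => p; rewrite inE negb_or.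
by rewrite addrC subrK.
Qed.

Lemma c_ge0 j : 0 <= W - Dt adj w j.
Proof.
rewrite c_expr; apply: sumr_ge0 => p pE; case: ifP => _ //.
have := @w_ge0 R n adj w Hw p pE. exact.
Qed.

Lemma Dt_le j : Dt adj w j <= W.
Proof. by rewrite -subr_ge0 c_ge0. Qed.

Lemma Dt_lt j : lf j -> Dt adj w j < W.
Proof.
move=> Hj; rewrite -subr_gt0 c_expr.
have [u Hu] := has_nb j.
rewrite (bigD1 (ed j u)) ?ed_in //= Hj ed_inc /=.
apply: (@lt_le_trans _ _ (w (ed j u).1 (ed j u).2)).
  by move: (ed_in Hu); rewrite inE => /andP [_ /Hw].
rewrite lerDl; apply: sumr_ge0 => p /andP [pE _]; case: ifP => _ //.
exact: (@w_ge0 R n adj w Hw p pE).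
Qed.

Lemma g_eq p : p \in Eset adj -> g p = if lf p.1 || lf p.2 then w p.1 p.2 else 0.
Proof.
rewrite inE => /andP [_ Hp]; rewrite /g.
case: (boolP (lf p.1)) => H1; case: (boolP (lf p.2)) => H2 //=; rewrite ?addr0 ?add0r //.
by case: (leaves_not_adj Hp H1 H2).
Qed.

Lemma sum_Dt : \sum_j Dt adj w j = n%:R * W - \sum_(p in Eset adj) g p.
Proof.
have -> : \sum_j Dt adj w j = \sum_(j : 'I_n) (W - (W - Dt adj w j)).
  by apply: eq_bigr => j _; rewrite opprB addrC subrK.
rewrite sumrB sumr_const card_ord; congr (_ - _); first by rewrite mulr_natl.
under eq_bigr do rewrite c_expr.
rewrite exchange_big /=; apply: eq_bigr => p pE.
have Hneq : p.1 != p.2.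
  by move: pE; rewrite inE => /andP [H _]; apply/eqP => E; rewrite E ltnn in H.
rewrite /g.
have -> : \sum_(j : 'I_n) (if lf j && ((p.1 == j) || (p.2 == j)) then w p.1 p.2 else 0) =
  \sum_(j : 'I_n) ((if j == p.1 then (if lf p.1 then w p.1 p.2 else 0) else 0) +
                  (if j == p.2 then (if lf p.2 then w p.1 p.2 else 0) else 0)).
  apply: eq_bigr => j _.
  case: (eqVneq j p.1) => [->|H1].
    by rewrite /= andbT (negbTE Hneq) addr0.
  case: (eqVneq j p.2) => [->|H2]; first by rewrite /= andbT add0r.
  by rewrite /= andbF addr0.
rewrite big_split /= -!(big_mkcond (fun j => j == _)) /= !big_pred1_eq //.
Qed.


Lemma g_bounds p : p \in Eset adj -> 0 <= g p <= w p.1 p.2.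
Proof.
move=> pE; have H0 := @w_ge0 R n adj w Hw p pE.
by rewrite g_eq //; case: ifP => _; rewrite ?lexx ?H0.
Qed.

Lemma G_le : \sum_(p in Eset adj) g p <= W.
Proof. by apply: ler_sum => p pE; case/andP: (g_bounds pE). Qed.

Lemma G_ge0 : 0 <= \sum_(p in Eset adj) g p.
Proof. by apply: sumr_ge0 => p pE; case/andP: (g_bounds pE). Qed.

Lemma sum_neq i : \sum_(j | j != i) Dt adj w j =
  n%:R * W - \sum_(p in Eset adj) g p - Dt adj w i.
Proof.
by rewrite -sum_Dt [X in _ = X - _](bigD1 i) //= addrAC subrr add0r.
Qed.

Lemma leafy_lf x : leafy adj x -> lf x.
Proof. move=> H; apply/card_le1_eqP => u v; rewrite !inE => Hu Hv.
exact: H.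
Qed.

Lemma exists_internal : exists c, ~~ lf c.
Proof.
have H0 : (0 < n)%N by apply: leq_trans hn.
have [u Hu] := has_nb (Ordinal H0).
case: (boolP (lf (Ordinal H0))) => H1; last by exists (Ordinal H0).
case: (boolP (lf u)) => H2; last by exists u.
by case: (leaves_not_adj Hu H1 H2).
Qed.

Lemma necessity :
  [/\ (forall i, (n - 2)%:R * Dt adj w i <= \sum_(j | j != i) Dt adj w j) /\
      (forall i j, (n - 2)%:R * Dt adj w i = \sum_(k | k != i) Dt adj w k ->
                   (n - 2)%:R * Dt adj w j = \sum_(k | k != j) Dt adj w k -> i = j),
      (exists i, (n - 2)%:R * Dt adj w i = \sum_(j | j != i) Dt adj w j) \/
      (exists i j, i != j /\ forall k, Dt adj w k <= Dt adj w i /\ Dt adj w k <= Dt adj w j)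
    & (#|[set i : 'I_n | [forall k : 'I_n, (Dt adj w k <= Dt adj w i)%R]]| <= n - 2)%N].
Proof.
have HN : (n - 2)%:R = n%:R - 2%:R :> R by rewrite natrB // ltnW.
set G := \sum_(p in Eset adj) g p.
have HG : G <= W := G_le.
have HG0 : 0 <= G := G_ge0.
have HN1 : 1 < n%:R :> R by rewrite ltr1n; apply: leq_trans hn.
have Hle : forall i, (n%:R - 1) * Dt adj w i <= (n%:R - 1) * W.
  move=> i; apply: ler_wpM2l; [lra | exact: Dt_le].
split.
- split.
    move=> i; have := Hle i; rewrite sum_neq HN -/G => H; lra.
  move=> i j; rewrite !sum_neq HN -/G => Ei Ej.
  have Hi := Hle i; have Hj := Hle j.
  have EW : G = W by lra.
  have Di : Dt adj w i = W.
    apply/eqP; rewrite -subr_eq0; have : (n%:R - 1) * (W - Dt adj w i) = 0 by lra.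
    move/eqP; rewrite mulf_eq0 => /orP [/eqP H|/eqP H]; first by exfalso; move: H; lra.
    by rewrite -oppr_eq0 opprB H.
  have Dj : Dt adj w j = W.
    apply/eqP; rewrite -subr_eq0; have : (n%:R - 1) * (W - Dt adj w j) = 0 by lra.
    move/eqP; rewrite mulf_eq0 => /orP [/eqP H|/eqP H]; first by exfalso; move: H; lra.
    by rewrite -oppr_eq0 opprB H.
  have Li : ~~ lf i by apply/negP => /Dt_lt; rewrite Di ltxx.
  have Lj : ~~ lf j by apply/negP => /Dt_lt; rewrite Dj ltxx.
  have Hall : forall a b, adj a b -> lf a || lf b.
    move=> a b Hab.
    have pE := ed_in Hab.
    have Hsum : \sum_(p in Eset adj) (w p.1 p.2 - g p) = 0.
      by rewrite sumrB -/G EW /W /Wt /sub_weight subrr.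
    have Hnn : forall p, p \in Eset adj -> 0 <= w p.1 p.2 - g p.
      by move=> p pE'; rewrite subr_ge0; case/andP: (g_bounds pE').
    have := psumr_eq0P Hnn Hsum pE.
    rewrite g_eq //; case: ifP => H; last first.
      rewrite subr0 => E0; move: pE; rewrite inE => /andP [_ /Hw].
      by rewrite E0 ltxx.
    move=> _; move: H; rewrite /ed; case: ifP => _ //=; by rewrite orbC.
  case: (eqVneq i j) => // Hij; exfalso; exact: (internal_path Hall Hij Li Lj).
- have [c Hc] := exists_internal.
  case: (pickP (fun j => (j != c) && ~~ lf j)) => [j /andP [Hjc Hj]|Hnone].
    right; exists j, c; split => // k.
    by split; rewrite ?(Dt_int Hj) ?(Dt_int Hc) Dt_le.
  left; exists c; rewrite sum_neq HN Dt_int // -/G.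
  have -> : G = W.
    rewrite /G /W /Wt /sub_weight; apply: eq_bigr => p pE; rewrite g_eq //.
    case: ifP => // /negbT; rewrite negb_or => /andP [H1 H2].
    have E1 : p.1 = c by apply/eqP; move/negbT: (Hnone p.1); rewrite negb_and negbK H1 orbF.
    have E2 : p.2 = c by apply/eqP; move/negbT: (Hnone p.2); rewrite negb_and negbK H2 orbF.
    by move: pE; rewrite inE E1 E2 ltnn.
  lra.
- have [c Hc] := exists_internal.
  have [u Hu] := has_nb c.
  have [l1 [l2 [H12 L1 L2]]] := two_leaves Hirr Hsym Hacyc Hu.
  have L1' := leafy_lf L1; have L2' := leafy_lf L2.
  apply: (@leq_trans #|~: [set l1; l2]|).
    apply: subset_leq_card; apply/subsetP => i; rewrite !inE => /forallP /(_ c).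
    rewrite Dt_int // => HW.
    apply/negP => /orP [] /eqP Ei; subst i.
      by have := Dt_lt L1'; rewrite ltNge HW.
    by have := Dt_lt L2'; rewrite ltNge HW.
  have := cardsC [set l1; l2]; rewrite cards2 H12 card_ord => Hc2.
  have -> : #|~: [set l1; l2]| = (n - 2)%N by rewrite -[in RHS]Hc2 addKn.
  by [].
Qed.

End Nec.

Local Open Scope ring_scope.

Definition padj n (par : 'I_n -> 'I_n) : rel 'I_n :=
  fun a b => (a != b) && ((par a == b) || (par b == a)).

Section ParTree.
Variable n : nat.
Variable par : 'I_n -> 'I_n.
Variable rank : 'I_n -> nat.
Variable root : 'I_n.
Hypothesis Hroot : par root = root.
Hypothesis Hpar : forall v, v != root -> (rank (par v) < rank v)%N.

Lemma par_neq v : v != root -> par v != v.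
Proof. by move/Hpar; apply: contraTneq => ->; rewrite ltnn. Qed.

Lemma padj_sym : symmetric (padj par).
Proof. by move=> a b; rewrite /padj eq_sym orbC. Qed.

Lemma padj_nb v x : padj par v x -> (par v = x) \/ (par x = v /\ x != root).
Proof.
case/andP => Hvx /orP [/eqP -> |/eqP Hx]; [by left | right; split => //].
by apply: contraNneq Hvx => Ex; rewrite -Hx Ex Hroot.
Qed.

Lemma to_root v : connect (padj par) v root.
Proof.
have : forall k v, (rank v < k)%N -> connect (padj par) v root.
  elim=> [|k IH] u //.
  case: (eqVneq u root) => [-> _ |Hu Hk]; first exact: connect0.
  apply: (@connect_trans _ _ (par u)).
    by apply: connect1; rewrite /padj eq_sym par_neq // eqxx.
  by apply: IH; apply: leq_trans (Hpar Hu) _.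
by apply; apply: ltnSn.
Qed.

Lemma ptree : is_tree (padj par).
Proof.
split; first by split; [move=> i; rewrite /padj eqxx | exact: padj_sym].
split.
  move=> x y; apply: (@connect_trans _ _ root); first exact: to_root.
  by rewrite (sym_connect_sym padj_sym); exact: to_root.
move=> s Hu Hs; apply/negP => Hc.
case: s Hu Hs Hc => [//|x0 s0] Hu Hs Hc.
have Hx0 : x0 \in x0 :: s0 by rewrite inE eqxx.
case: (arg_maxnP rank Hx0) => v Hv Hmax.
case: (rot_to Hv) => i s' Ei.
have Hu' : uniq (v :: s') by rewrite -Ei rot_uniq.
have Hc' : cycle (padj par) (v :: s') by rewrite -Ei rot_cycle.
have Hs' : (3 <= size (v :: s'))%N by rewrite -Ei size_rot.
have Hin : forall x, x \in v :: s' -> padj par v x -> x = par v.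
  move=> x Hx Hvx; case: (padj_nb Hvx) => [//|[Hxv Hxr]].
  have H1 := Hpar Hxr; rewrite Hxv in H1.
  have H2 : (rank x <= rank v)%N by apply: Hmax; rewrite -Ei mem_rot in Hx.
  by rewrite ltnNge H2 in H1.
clear Ei; case: s' Hu' Hc' Hs' Hin => [|a [|b t]] //= Hu' Hc' _ Hin.
move: Hc' => /andP [Ha]; rewrite rcons_path => /andP [_ Hl]; case/andP: Hl => _ Hl.
have Ea : a = par v by apply: Hin Ha; rewrite !inE eqxx orbT.
have Hl' : padj par v (last b t) by rewrite /padj eq_sym orbC.
have Eb : last b t = par v.
  by apply: Hin Hl'; rewrite (in_cons v) (in_cons a) mem_last !orbT.
have : last b t \in b :: t by apply: mem_last.
case/and3P: Hu' => _ /negP Ha' _; move=> Hlt; apply: Ha'.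
by rewrite Ea -Eb.
Qed.


Variable R : realFieldType.
Variable wt : 'I_n -> R.
Definition pw (a b : 'I_n) := if par b == a then wt b else wt a.

Lemma par_par v : v != root -> par (par v) != v.
Proof.
move=> Hv; apply/eqP => E.
have H1 := Hpar Hv.
have Hpv : par v != root by apply: contraNneq Hv => E2; rewrite -E E2 Hroot.
by have := Hpar Hpv; rewrite E ltnNge (ltnW H1).
Qed.

Lemma pw_ed v : v != root -> pw (ed v (par v)).1 (ed v (par v)).2 = wt v.
Proof.
move=> Hv; rewrite /ed; case: ifP => _ /=; rewrite /pw; last by rewrite eqxx.
by rewrite (negbTE (par_par Hv)).
Qed.

Lemma Eset_par : Eset (padj par) = [set ed v (par v) | v in [set v | v != root]].
Proof.
apply/setP => p; apply/idP/idP.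
  case: p => a b; rewrite inE /= => /andP [Hlt Hab].
  have Hneq : a != b by apply/eqP => E; rewrite E ltnn in Hlt.
  case: (padj_nb Hab) => [Ep|[Ep Hb]].
    apply/imsetP; exists a.
      by rewrite inE; apply: contraNneq Hneq => Ea; rewrite -Ep Ea Hroot.
    by rewrite Ep /ed Hlt.
  apply/imsetP; exists b; first by rewrite inE.
  by rewrite Ep /ed ltnNge (ltnW Hlt).
case/imsetP => v; rewrite inE => Hv ->.
by apply: (ed_in ptree); rewrite /padj eq_sym par_neq //= eqxx.
Qed.

Lemma ed_par_inj : {in [set v | v != root] &, injective (fun v => ed v (par v))}.
Proof.
move=> u v; rewrite !inE => Hu Hv /= E.
have : (u = v /\ par u = par v) \/ (u = par v /\ par u = v).
  move: E; rewrite /ed; case: ifP => _; case: ifP => _ [] E1 E2; tauto.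
case=> [[//]|[E1 E2]].
by move: (par_par Hv); rewrite -E1 E2 eqxx.
Qed.

Lemma W_par : Wt (padj par) pw = \sum_(v | v != root) wt v.
Proof.
rewrite /Wt /sub_weight Eset_par big_imset; last exact: ed_par_inj.
rewrite /=; apply: eq_big => v; first by rewrite inE.
by rewrite inE => Hv; rewrite pw_ed.
Qed.

Lemma pos_pw : (forall v, v != root -> 0 < wt v) -> pos_weights (padj par) pw.
Proof.
move=> Hpos a b /andP [Hab /orP [/eqP Ea|/eqP Eb]]; rewrite /pw.
  case: ifP => [/eqP Eb|_]; last first.
    apply: Hpos; apply: contraNneq Hab => Ear; by rewrite -Ea Ear Hroot.
  apply: Hpos; apply: contraNneq Hab => Ebr; by rewrite -Eb Ebr Hroot.
rewrite Eb eqxx; apply: Hpos; apply: contraNneq Hab => Ebr.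
by rewrite -Eb Ebr Hroot.
Qed.

Lemma nb_leaf l : (forall x, par x != l) -> (#|nb (padj par) l| <= 1)%N.
Proof.
move=> Hl; apply: (@leq_trans #|[set par l]|); last by rewrite cards1.
apply: subset_leq_card; apply/subsetP => x; rewrite !inE => /andP [_ /orP [/eqP -> //|]].
by rewrite (negbTE (Hl x)).
Qed.

Lemma Enot_leaf l : (forall x, par x != l) -> l != root ->
  sub_weight pw (Enot (padj par) l) = Wt (padj par) pw - wt l.
Proof.
move=> Hl Hlr.
have HE : ed l (par l) \in Eset (padj par).
  by apply: (ed_in ptree); rewrite /padj eq_sym par_neq //= eqxx.
rewrite /Wt /sub_weight [in RHS](bigD1 (ed l (par l))) //= pw_ed // addrC addrK.
apply: eq_bigl => p; rewrite inE; case: (boolP (p \in Eset (padj par))) => //= pE.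
apply/idP/idP.
  case/andP=> H1 H2; apply/eqP => E; have := ed_inc l (par l).
  by rewrite -E (negbTE H1) (negbTE H2).
move=> Hne; move: pE; case: p Hne => a b Hne; rewrite inE /= => /andP [Hlt Hab].
apply/andP; split; apply/eqP => E; move/eqP: Hne; apply; subst.
  case/andP: Hab => _ /orP [/eqP Eb|]; last by rewrite (negbTE (Hl b)).
  by rewrite /ed Eb Hlt.
case/andP: Hab => _ /orP [|/eqP Ea]; first by rewrite (negbTE (Hl a)).
by rewrite /ed Ea ltnNge (ltnW Hlt).
Qed.

End ParTree.

Local Open Scope ring_scope.

Section Suff.
Variable R : realFieldType.
Variable n : nat.
Hypothesis hn : (3 <= n)%N.
Variable D : 'I_n -> R.
Hypothesis H1a : forall i, (n - 2)%:R * D i <= \sum_(j | j != i) D j.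
Hypothesis H1b : forall i j, (n - 2)%:R * D i = \sum_(k | k != i) D k ->
                   (n - 2)%:R * D j = \sum_(k | k != j) D k -> i = j.
Hypothesis H2 : (exists i, (n - 2)%:R * D i = \sum_(j | j != i) D j) \/
      (exists i j, i != j /\ forall k, D k <= D i /\ D k <= D j).
Hypothesis H3 : (#|[set i : 'I_n | [forall k : 'I_n, (D k <= D i)%R]]| <= n - 2)%N.

Let H0 : (0 < n)%N. Proof. exact: leq_trans hn. Qed.
Definition im := Order.arg_max (Ordinal H0) xpredT D.
Lemma Him k : D k <= D im.
Proof. by rewrite /im; case: Order.TotalTheory.arg_maxP => // i _; apply. Qed.
Let M := D im.
Definition K := [set i : 'I_n | [forall k : 'I_n, (D k <= D i)%R]].
Lemma inK i : (i \in K) = (D i == M).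
Proof.
rewrite inE; apply/forallP/eqP => [H|E k]; last by rewrite E Him.
by apply/le_anti; rewrite Him H.
Qed.
Lemma DleM i : D i <= M. Proof. exact: Him. Qed.

Let s := enum K.
Let k := #|K|.
Lemma size_s : size s = k. Proof. by rewrite /s /k cardE. Qed.
Lemma imK : im \in K. Proof. by rewrite inK. Qed.
Lemma k_gt0 : (0 < k)%N. Proof. by rewrite /k card_gt0; apply/set0Pn; exists im; exact: imK. Qed.
Let root := nth im s 0.
Lemma nth_K i : (i < k)%N -> nth im s i \in K.
Proof. by move=> Hi; rewrite -mem_enum mem_nth // size_s. Qed.
Lemma idx_nth i : (i < k)%N -> index (nth im s i) s = i.
Proof. by move=> Hi; rewrite index_uniq ?size_s // enum_uniq. Qed.
Lemma idx_lt v : v \in K -> (index v s < k)%N.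
Proof. by move=> Hv; rewrite -size_s index_mem mem_enum. Qed.
Lemma nth_idx v : v \in K -> nth im s (index v s) = v.
Proof. by move=> Hv; rewrite nth_index // mem_enum. Qed.
Lemma rootK : root \in K. Proof. exact: nth_K k_gt0. Qed.

Lemma L2 : exists l1 l2, [/\ l1 \notin K, l2 \notin K & l1 != l2].
Proof.
have : (1 < #|~: K|)%N.
  have := cardsC K; rewrite card_ord => Hc.
  have : (k <= n - 2)%N by exact: H3.
  rewrite /k; lia.
case/card_gt1P => l1 [l2 [Hl1 Hl2 H12]].
by exists l1, l2; rewrite -!in_setC.
Qed.


Let T := \sum_j (M - D j).
Lemma sumD i : \sum_(j | j != i) D j = n%:R * M - T - D i.
Proof.
have E : \sum_j D j = n%:R * M - T.
  by rewrite /T sumrB sumr_const card_ord mulr_natl opprB addrC subrK.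
by rewrite -E [in RHS](bigD1 i) //= addrAC subrr add0r.
Qed.

Lemma HN : (n - 2)%:R = n%:R - 2%:R :> R.
Proof. by rewrite natrB // ltnW. Qed.

Lemma HN1 : 1 < n%:R :> R.
Proof. by rewrite ltr1n; apply: leq_trans hn. Qed.

Lemma T_le : T <= M.
Proof. have := H1a im; rewrite sumD HN -/M; have := HN1; lra. Qed.

Lemma eq_max i : (n - 2)%:R * D i = \sum_(j | j != i) D j -> D i = M.
Proof.
rewrite sumD HN => Ei.
have := H1a im; rewrite sumD HN -/M => Eim.
have Hpos := HN1.
have H : 0 <= (n%:R - 1) * (D i - M) by lra.
rewrite pmulr_rge0 ?subr_gt0 // subr_ge0 in H.
by apply/le_anti; rewrite H DleM.
Qed.

Lemma T_k1 : k = 1%N -> T = M.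
Proof.
move=> Hk; case: H2 => [[i Ei]|[i [j [Hij Hmax]]]].
  have Di := eq_max Ei.
  by move: Ei; rewrite sumD HN Di; lra.
exfalso.
have Hi : i \in K by rewrite inK eq_le DleM; case: (Hmax im).
have Hj : j \in K by rewrite inK eq_le DleM; case: (Hmax im).
have : (1 < k)%N by apply/card_gt1P; exists i, j.
by rewrite Hk.
Qed.

Lemma T_k2 : (1 < k)%N -> T < M.
Proof.
move=> Hk; rewrite lt_def T_le andbT; apply/eqP => ET.
have Hr := rootK.
have H1 := nth_K Hk.
have Eq : forall v, v \in K -> (n - 2)%:R * D v = \sum_(j | j != v) D j.
  move=> v; rewrite inK => /eqP Dv; rewrite sumD HN Dv ET; lra.
have := H1b (Eq _ Hr) (Eq _ H1).
move/(congr1 (fun x => index x s)); rewrite /root !idx_nth //.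
exact: leq_trans Hk.
Qed.

Section Constr.
Variables l1 l2 : 'I_n.
Hypotheses (Hl1 : l1 \notin K) (Hl2 : l2 \notin K) (H12 : l1 != l2).

Definition par v := if v \in K then nth im s (index v s).-1
                    else if v == l1 then root else nth im s k.-1.
Definition rank v := if v \in K then index v s else k.

Lemma par_K v : par v \in K.
Proof.
rewrite /par; case: ifP => Hv.
  by apply: nth_K; apply: leq_ltn_trans (leq_pred _) (idx_lt Hv).
case: ifP => _; first exact: rootK.
by apply: nth_K; rewrite prednK // k_gt0.
Qed.

Lemma par_root : par root = root.
Proof. by rewrite /par rootK /root idx_nth // k_gt0. Qed.

Lemma idx0 v : v \in K -> index v s = 0%N -> v = root.
Proof. by move=> Hv E; rewrite -(nth_idx Hv) E. Qed.

Lemma Hpar v : v != root -> (rank (par v) < rank v)%N.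
Proof.
move=> Hvr; rewrite /rank par_K.
case: ifP => Hv.
  have H0v : index v s != 0%N by apply: contraNneq Hvr => E; apply/eqP; exact: idx0 Hv E.
  rewrite /par Hv idx_nth; last by apply: leq_ltn_trans (leq_pred _) (idx_lt Hv).
  by rewrite prednK ?lt0n // ltnSn.
exact: idx_lt (par_K v).
Qed.


Let x0 := (M - T) / (k.-1)%:R.
Definition wt v := (if v \in K then x0 else 0) + (M - D v).

Lemma wt_pos v : v != root -> 0 < wt v.
Proof.
move=> Hvr; rewrite /wt; case: ifP => Hv.
  have E : D v = M by apply/eqP; rewrite -inK.
  have H0v : index v s != 0%N by apply: contraNneq Hvr => E0; apply/eqP; exact: idx0 Hv E0.
  have Hk : (1 < k)%N by apply: leq_trans (idx_lt Hv); rewrite ltnS lt0n.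
  rewrite E subrr addr0 divr_gt0 // ?subr_gt0 ?T_k2 // ltr0n.
  by rewrite -ltnS prednK // ltnW.
have : D v != M by rewrite -inK Hv.
by rewrite add0r subr_gt0 lt_def eq_sym DleM andbT.
Qed.

Lemma W_eq : Wt (padj par) (pw par wt) = M.
Proof.
rewrite (W_par par_root Hpar) /wt big_split /=.
have -> : \sum_(v | v != root) (M - D v) = T.
  rewrite /T [in RHS](bigD1 root) //=.
  have /eqP -> : D root == M by rewrite -inK rootK.
  by rewrite subrr add0r.
have -> : \sum_(v | v != root) (if v \in K then x0 else 0) = \sum_(v in K :\ root) x0.
  rewrite big_mkcond [RHS]big_mkcond /=; apply: eq_bigr => v _; rewrite !inE.
  by case: (v != root).
rewrite sumr_const.
have Hc : #|K :\ root| = k.-1 by rewrite /k (cardsD1 root K) rootK.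
rewrite Hc.
case: (ltngtP k 1) => Hk.
- by move: k_gt0; rewrite -/k; lia.
- rewrite -mulr_natr /x0 -mulrA mulVf ?mulr1 ?subrK //.
  rewrite pnatr_eq0 -lt0n; by rewrite -ltnS prednK // ltnW.
- by rewrite Hk /= mulr0n add0r T_k1.
Qed.

Lemma nb_l l : l \notin K -> (#|nb (padj par) l| <= 1)%N.
Proof.
move=> Hl; apply: nb_leaf => x; apply: contraNneq Hl => <-; exact: par_K.
Qed.

Lemma nb_int v : v \in K -> (1 < #|nb (padj par) v|)%N.
Proof.
move=> Hv.
have hi := idx_lt Hv.
set i := index v s in hi.
have Ev : nth im s i = v by exact: nth_idx.
set A := if i == 0%N then l1 else nth im s i.-1.
set B := if i == k.-1 then l2 else nth im s i.+1.
have Hpv : par v = nth im s i.-1 by rewrite /par Hv.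
have HA : padj par v A.
  rewrite /A; case: eqP => Hi0.
    have Er : v = root by apply: idx0.
    rewrite /padj; apply/andP; split; first by apply: contraNneq Hl1 => <-.
    by rewrite /par (negbTE Hl1) eqxx -Er eqxx orbT.
  have Hvr : v != root.
    by apply/eqP => Er; apply: Hi0; rewrite /i Er /root idx_nth // k_gt0.
  by rewrite /padj -Hpv eq_sym (par_neq Hpar Hvr) eqxx.
have HB : padj par v B.
  rewrite /B; case: eqP => Hik.
    have H21 : l2 != l1 by rewrite eq_sym.
    rewrite /padj; apply/andP; split; first by apply: contraNneq Hl2 => <-.
    by rewrite /par (negbTE Hl2) (negbTE (H21 : l2 != l1)) -Hik Ev eqxx orbT.
  have Hi1 : (i.+1 < k)%N by move: hi Hik; lia.
  have HBK := nth_K Hi1.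
  rewrite /padj; apply/andP; split.
    have : index v s != index (nth im s i.+1) s by rewrite idx_nth // -/i; lia.
    by apply: contraNneq => ->.
  by rewrite /par HBK idx_nth //= Ev eqxx orbT.
have HAB : A != B.
  rewrite /A /B; case: ifP => /eqP Hi0; case: ifP => /eqP Hik //.
  - by apply: contraNneq Hl1 => ->; apply: nth_K; move: hi Hik; lia.
  - by apply: contraNneq Hl2 => <-; apply: nth_K; move: hi; lia.
  - apply/eqP => E.
    have := idx_nth (_ : (i.-1 < k)%N); rewrite E idx_nth; last by move: hi Hik; lia.
    by move=> /(_ ltac:(move: hi; lia)); lia.
apply/card_gt1P; exists A, B; by rewrite !inE HA HB.
Qed.


Lemma suff_tree : exists (adj : rel 'I_n) (w : 'I_n -> 'I_n -> R),
  [/\ is_tree adj, pos_weights adj w & forall i, is_D adj w [set~ i] (D i)].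
Proof.
have Ht := ptree par_root Hpar.
have Hw : pos_weights (padj par) (pw par wt) := pos_pw par_root wt_pos.
exists (padj par), (pw par wt); split => // i.
have := is_D_Dt Ht Hw i.
suff -> : Dt (padj par) (pw par wt) i = D i by [].
rewrite /Dt; case: (boolP (i \in K)) => Hi.
  rewrite nb_int // W_eq; by apply/esym/eqP; rewrite -inK.
rewrite ltnNge nb_l //= (Enot_leaf par_root Hpar).
- by rewrite W_eq /wt (negbTE Hi) add0r opprB addrC subrK.
- by move=> x; apply: contraNneq Hi => <-; exact: par_K.
- by apply: contraNneq Hi => ->; exact: rootK.
Qed.

End Constr.

Lemma sufficiency : exists (adj : rel 'I_n) (w : 'I_n -> 'I_n -> R),
  [/\ is_tree adj, pos_weights adj w & forall i, is_D adj w [set~ i] (D i)].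
Proof. by have [l1 [l2 [Hl1 Hl2 H12]]] := L2; exact: (suff_tree Hl1 Hl2 H12). Qed.

End Suff.


Theorem theorem3p2 (R : realFieldType) (n : nat) (hn : (3 <= n)%N)
  (D : 'I_n -> R) (hD : forall i, 0 < D i) :
  (exists (adj : rel 'I_n) (w : 'I_n -> 'I_n -> R),
     [/\ is_tree adj, pos_weights adj w &
         forall i, is_D adj w [set~ i] (D i)])
  <->
  [/\ (* (i) *)
      (forall i, (n - 2)%:R * D i <= \sum_(j | j != i) D j) /\
      (forall i j, (n - 2)%:R * D i = \sum_(k | k != i) D k ->
                   (n - 2)%:R * D j = \sum_(k | k != j) D k -> i = j),
      (* (ii) *)
      (exists i, (n - 2)%:R * D i = \sum_(j | j != i) D j) \/
      (exists i j, i != j /\ forall k, D k <= D i /\ D k <= D j)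
    & (* (iii) *)
      (#|[set i : 'I_n | [forall k : 'I_n, (D k <= D i)%R]]| <= n - 2)%N].
Proof.
split.
  move=> [adj [w [Ht Hw HD]]].
  have E : D = Dt adj w.
    apply: functional_extensionality => i.
    exact: is_D_uniq (HD i) (is_D_Dt Ht Hw i).
  rewrite E; exact: necessity Ht Hw hn.
case=> [[H1a H1b] H2 H3].
have H := sufficiency hn H1a H1b H2; apply: H; exact: H3.
Qed.
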